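(* Fix positive integers $k,x^*$, a real number $n'$ treated as an indeterminate, and real numbers $b_1,\dots,b_k$ (indices mod $k$). For $x=(x_1,\dots,x_k)\in\{0,\dots,x^*\}^k$ consider $$E_x(n')=\sum_{i=1}^{k}\prod_{j=1}^{k}\prod_{h=x_j+1}^{x^*}(n'-b_{j+i}+h),$$ a polynomial in $n'$ of degree $L=\sum_{j=1}^k(x^*-x_j)$. Then for every integer $m\ge 0$, the coefficient of $n'^{\,L-m}$ in $E_x(n')$ is a linear combination of cyclic statistics of $x$ of order at most $m$, each multiplied by some function of $x$ that is invariant under permutations of $(x_1,\dots,x_k)$ (these functions and the statistics used may depend on $b$ and $x^*$ but are the same for all $x$).
   Context: For indices $i_1,\dots,i_r$ (mod $k$), the cyclic statistic of order $r$ is $S_{i_1,\dots,i_r}(x)=\sum_{j=1}^{k}x_{i_1+j}\cdots x_{i_r+j}$; a cyclic statistic of order $0$ is understood as a constant. *)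

(* Defs.v *)
From HB Require Import structures.
From mathcomp Require Import all_boot all_order all_fingroup all_algebra.
From mathcomp Require Import reals.
Set Implicit Arguments. Unset Strict Implicit. Unset Printing Implicit Defensive.
Import Order.TTheory GRing.Theory Num.Theory.
Local Open Scope ring_scope.

Definition cshift (k : nat) (i j : 'I_k) : 'I_k :=
  Ordinal (ltn_pmod (i + j) (leq_ltn_trans (leq0n i) (ltn_ord i))).

Definition cycstat (R : nzRingType) (k : nat) (t : seq 'I_k) (x : 'I_k -> nat) : R :=
  \sum_(j < k) \prod_(i <- t) ((x (cshift i j))%:R : R).

Definition Epoly (R : nzRingType) (k xs : nat) (b : 'I_k -> R) (x : 'I_k -> nat)
  : {poly R} :=
  \sum_(i < k) \prod_(j < k) \prod_((x j).+1 <= h < xs.+1)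
      ('X - (b (cshift j i))%:P + (h%:R)%:P).

Definition Ldeg (k xs : nat) (x : 'I_k -> nat) : nat := (\sum_(j < k) (xs - x j))%N.

Definition Ecoef (R : nzRingType) (k xs : nat) (b : 'I_k -> R) (x : 'I_k -> nat)
  (m : nat) : R :=
  if (m <= Ldeg xs x)%N then (Epoly xs b x)`_(Ldeg xs x - m) else 0.

Definition perm_invariant (R : Type) (k xs : nat) (f : ('I_k -> 'I_xs.+1) -> R) :=
  forall (x : 'I_k -> 'I_xs.+1) (s : {perm 'I_k}), f (x \o s) = f x.

(* Main.v *)
Require Import Defs.
From HB Require Import structures.
From mathcomp Require Import all_boot all_order all_fingroup all_algebra.
From mathcomp Require Import reals.
From mathcomp Require Import ring lra.
Set Implicit Arguments. Unset Strict Implicit. Unset Printing Implicit Defensive.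
Import Order.TTheory GRing.Theory Num.Theory.
Local Open Scope ring_scope.


Fixpoint esym (R : comNzRingType) (s : seq R) (m : nat) : R :=
  match s with
  | [::] => (m == 0%N)%:R
  | a :: s' => match m with 0 => 1 | m'.+1 => esym s' m + a * esym s' m' end
  end.

Definition psum (R : comNzRingType) (s : seq R) (r : nat) : R := \sum_(a <- s) a ^+ r.

Lemma esym0 (R : comNzRingType) (s : seq R) : esym s 0 = 1.
Proof. by case: s. Qed.

Lemma esymS (R : comNzRingType) (a : R) s m : esym (a :: s) m.+1 = esym s m.+1 + a * esym s m.
Proof. by []. Qed.

Lemma esym_big (R : comNzRingType) (s : seq R) m : (size s < m)%N -> esym s m = 0.
Proof.
elim: s m => [|a s IH] [|m] //=.
by rewrite ltnS => h; rewrite (IH m.+1) ?ltnS ?(ltnW h) // (IH m h) mulr0 addr0.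
Qed.

Lemma newton_aux (R : comNzRingType) (a : R) s n :
  \sum_(r < n.+1) (-1) ^+ r * a ^+ r.+1 * esym (a :: s) (n - r) = a * esym s n.
Proof.
elim: n => [|n IH]; first by rewrite big_ord1 /= expr0 !mul1r esym0 mulr1.
rewrite big_ord_recl /= expr0 mul1r subn0.

have -> : \sum_(i < n.+1) (-1) ^+ (bump 0 i) * a ^+ (bump 0 i).+1 * esym (a :: s) (n.+1 - bump 0 i)
   = - a * \sum_(r < n.+1) (-1) ^+ r * a ^+ r.+1 * esym (a :: s) (n - r).
  rewrite mulr_sumr; apply: eq_bigr => i _.
  rewrite /bump /= add1n subSS !exprS; ring.
by rewrite IH; ring.
Qed.

Lemma newton (R : comNzRingType) (s : seq R) m :
  m%:R * esym s m = \sum_(r < m) (-1) ^+ r * esym s (m - r.+1) * psum s r.+1.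
Proof.
elim: s m => [|a s IH] m.
  rewrite /psum; under eq_bigr do rewrite big_nil mulr0.
  rewrite big1 //; case: m => [|m] /=; [by rewrite mul0r | by rewrite mulr0n mulr0].
case: m => [|n]; first by rewrite big_ord0 mul0r.
have E1 : \sum_(r < n.+1) (-1) ^+ r * esym (a :: s) (n.+1 - r.+1) * psum (a :: s) r.+1
  = \sum_(r < n.+1) (-1) ^+ r * esym (a :: s) (n - r) * psum s r.+1
    + \sum_(r < n.+1) (-1) ^+ r * a ^+ r.+1 * esym (a :: s) (n - r).
  rewrite -big_split /=; apply: eq_bigr => i _.
  rewrite subSS /psum big_cons; ring.
rewrite E1 newton_aux.
rewrite big_ord_recr subnn esym0.
have E2 : \sum_(i < n) (-1) ^+ (widen_ord (leqnSn n) i) * esym (a :: s) (n - widen_ord (leqnSn n) i) *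
    psum s (widen_ord (leqnSn n) i).+1
  = \sum_(i < n) (-1) ^+ i * esym s (n - i) * psum s i.+1
    + a * \sum_(i < n) (-1) ^+ i * esym s (n - i.+1) * psum s i.+1.
  rewrite mulr_sumr -big_split /=; apply: eq_bigr => i _.
  change (nat_of_ord (widen_ord (leqnSn n) i)) with (nat_of_ord i).
  have hi := ltn_ord i.
  have -> : (n - i = (n - i.+1).+1)%N by rewrite subnSK.
  ring.
rewrite E2 -IH esymS mulrDr.
have := IH n.+1; rewrite big_ord_recr subSS subnn esym0 => ->.
have -> : \sum_(i < n) (-1) ^+ (widen_ord (leqnSn n) i) * esym s (n.+1 - (widen_ord (leqnSn n) i).+1) *
    psum s (widen_ord (leqnSn n) i).+1 = \sum_(i < n) (-1) ^+ i * esym s (n - i) * psum s i.+1.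
  by apply: eq_bigr => i _; rewrite subSS.
have -> : (n.+1)%:R = n%:R + 1 :> R by rewrite mulrSr.
rewrite /=; ring.
Qed.


Lemma coef_prodXa (R : comNzRingType) (s : seq R) j :
  (\prod_(a <- s) ('X + a%:P))`_j = if (j <= size s)%N then esym s (size s - j) else 0.
Proof.
elim: s j => [|a s IH] j.
  rewrite big_nil coefC /=; case: j => //.
rewrite big_cons mulrDl coefD coefXM coefCM.
case: j => [|j].
  rewrite eqxx add0r IH leq0n !subn0 /=.
  by rewrite (@esym_big _ s (size s).+1) // add0r.
rewrite (_ : (j.+1 == 0%N) = false) // succnK !IH [size (a :: s)]/= ltnS subSS.
case: (ltngtP j (size s)) => h.
- by rewrite -subnSK // esymS.
- by rewrite mulr0 addr0.
- by rewrite h subnn mulr0 addr0 !esym0.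
Qed.


Definition mono (R : realType) (k xs : nat) (t : seq 'I_k) (i : 'I_k) (x : 'I_k -> 'I_xs.+1) : R :=
  \prod_(a <- t) ((nat_of_ord (x (cshift a i)))%:R : R).

Fixpoint okl (R : realType) (k xs : nat) (m : nat)
  (s : seq (seq 'I_k * (('I_k -> 'I_xs.+1) -> R))) : Prop :=
  match s with
  | [::] => True
  | p :: s' => ((size p.1 <= m)%N /\ perm_invariant p.2) /\ okl m s'
  end.

Definition D (R : realType) (k xs : nat) (m : nat) (F : 'I_k -> ('I_k -> 'I_xs.+1) -> R) : Prop :=
  exists s : seq (seq 'I_k * (('I_k -> 'I_xs.+1) -> R)), okl m s /\
    forall i x, F i x = \sum_(p <- s) p.2 x * mono R p.1 i x.

Lemma okl_cat (R : realType) k xs m (s1 s2 : seq (seq 'I_k * (('I_k -> 'I_xs.+1) -> R))) :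
  okl m s1 -> okl m s2 -> okl m (s1 ++ s2).
Proof. by elim: s1 => [|p s IH] //= [h1 h2] h3; split => //; apply: IH. Qed.

Lemma okl_In (R : realType) k xs m (s : seq (seq 'I_k * (('I_k -> 'I_xs.+1) -> R))) :
  okl m s -> forall p, List.In p s -> (size p.1 <= m)%N /\ perm_invariant p.2.
Proof. by elim: s => [|q s IH] //= [h1 h2] p [<-|]; [|apply: IH]. Qed.

Lemma okl_map (R : realType) k xs m m' (s : seq (seq 'I_k * (('I_k -> 'I_xs.+1) -> R)))
  (g : seq 'I_k * (('I_k -> 'I_xs.+1) -> R) -> seq 'I_k * (('I_k -> 'I_xs.+1) -> R)) :
  (forall p, (size p.1 <= m)%N /\ perm_invariant p.2 -> (size (g p).1 <= m')%N /\ perm_invariant (g p).2) ->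
  okl m s -> okl m' (map g s).
Proof. by move=> H; elim: s => [|p s IH] //= [h1 h2]; split; [apply: H | apply: IH]. Qed.

Lemma D_ext (R : realType) k xs m (F G : 'I_k -> ('I_k -> 'I_xs.+1) -> R) :
  (forall i x, F i x = G i x) -> D m F -> D m G.
Proof. by move=> e [s [h1 h2]]; exists s; split => // i x; rewrite -e h2. Qed.

Lemma D_mono (R : realType) k xs m m' (F : 'I_k -> ('I_k -> 'I_xs.+1) -> R) :
  (m <= m')%N -> D m F -> D m' F.
Proof.
move=> le [s [h1 h2]]; exists s; split => //.
have -> : s = map id s by rewrite map_id.
apply: (okl_map _ h1) => p [a b]; split => //; exact: leq_trans le.
Qed.

Lemma D_add (R : realType) k xs m (F G : 'I_k -> ('I_k -> 'I_xs.+1) -> R) :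
  D m F -> D m G -> D m (fun i x => F i x + G i x).
Proof.
move=> [s [h1 h2]] [s' [h1' h2']]; exists (s ++ s'); split; first exact: okl_cat.
by move=> i x; rewrite big_cat h2 h2'.
Qed.

Lemma D_zero (R : realType) k xs m : D m (fun (_ : 'I_k) (_ : 'I_k -> 'I_xs.+1) => 0 : R).
Proof. by exists [::]; split => // i x; rewrite big_nil. Qed.

Lemma D_sum (R : realType) k xs m (I : Type) (r : seq I) (F : I -> 'I_k -> ('I_k -> 'I_xs.+1) -> R) :
  (forall j, List.In j r -> D m (F j)) -> D m (fun i x => \sum_(j <- r) F j i x).
Proof.
elim: r => [|j r IH] H.
  by eapply D_ext; [|exact: D_zero] => i x /=; rewrite big_nil.
eapply D_ext; [|exact: (D_add (H j (or_introl erefl)) (IH (fun j h => H j (or_intror h))))].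
by move=> i x /=; rewrite big_cons.
Qed.

Lemma D_scale (R : realType) k xs m (g : ('I_k -> 'I_xs.+1) -> R) (F : 'I_k -> ('I_k -> 'I_xs.+1) -> R) :
  perm_invariant g -> D m F -> D m (fun i x => g x * F i x).
Proof.
move=> pg [s [h1 h2]]; exists (map (fun p => (p.1, fun x => g x * p.2 x)) s); split.
  apply: (okl_map _ h1) => p [a b]; split => // x0 s0 /=; by rewrite pg b.
by move=> i x; rewrite h2 big_map mulr_sumr; apply: eq_bigr => p _ /=; rewrite mulrA.
Qed.

Lemma D_monomul (R : realType) k xs a b (t : seq 'I_k) (G : 'I_k -> ('I_k -> 'I_xs.+1) -> R) :
  (size t <= a)%N -> D b G -> D (a + b) (fun i x => mono R t i x * G i x).
Proof.
move=> st [s [h1 h2]]; exists (map (fun p => (t ++ p.1, p.2)) s); split.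
  apply: (okl_map _ h1) => p [c d]; split => //=; rewrite size_cat; exact: leq_add.
move=> i x; rewrite h2 big_map mulr_sumr; apply: eq_bigr => p _ /=.
by rewrite /mono big_cat /=; ring.
Qed.

Lemma D_mul (R : realType) k xs a b (F G : 'I_k -> ('I_k -> 'I_xs.+1) -> R) :
  D a F -> D b G -> D (a + b) (fun i x => F i x * G i x).
Proof.
move=> [s [h1 h2]] hG.
eapply D_ext; last first.
  apply: (D_sum (r := s) (F := fun p i x => p.2 x * (mono R p.1 i x * G i x))).
  move=> p hp; have [sp pp] := okl_In h1 hp.
  by apply: D_scale pp _; apply: D_monomul.
by move=> i x /=; rewrite h2 mulr_suml; apply: eq_bigr => p _; rewrite mulrA.
Qed.

Lemma D_sym (R : realType) k xs (g : ('I_k -> 'I_xs.+1) -> R) :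
  perm_invariant g -> D 0 (fun _ x => g x).
Proof.
move=> pg; exists [:: ([::], g)]; split => //= i x.
by rewrite big_cons big_nil /mono big_nil mulr1 addr0.
Qed.

Lemma D_const (R : realType) k xs (c : R) : D 0 (fun (_ : 'I_k) (_ : 'I_k -> 'I_xs.+1) => c).
Proof. by apply: D_sym. Qed.

Lemma D_mono1 (R : realType) k xs m (t : seq 'I_k) :
  (size t <= m)%N -> D m (fun i (x : 'I_k -> 'I_xs.+1) => mono R t i x).
Proof.
move=> st; have h := D_monomul st (@D_const R k xs 1); rewrite addn0 in h.
by apply: (D_ext _ h) => i x /=; rewrite mulr1.
Qed.

Lemma okl_nth (R : realType) k xs m (s : seq (seq 'I_k * (('I_k -> 'I_xs.+1) -> R))) n :
  okl m s -> (size (nth ([::], fun _ => 0%R : R) s n).1 <= m)%N /\ perm_invariant (nth ([::], fun _ => 0%R : R) s n).2.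
Proof.
elim: s n => [|p s IH] n /=; first by rewrite nth_nil.
by move=> [h1 h2]; case: n => [|n] //=; apply: IH.
Qed.

Lemma D_final (R : realType) k xs m (F : 'I_k -> ('I_k -> 'I_xs.+1) -> R) :
  D m F ->
  exists (N : nat) (t : 'I_N -> seq 'I_k) (f : 'I_N -> ('I_k -> 'I_xs.+1) -> R),
    (forall n : 'I_N, (size (t n) <= m)%N /\ perm_invariant (f n)) /\
    forall x : 'I_k -> 'I_xs.+1,
      \sum_(i < k) F i x =
      \sum_(n < N) f n x * @cycstat R k (t n) (fun j => nat_of_ord (x j)).
Proof.
move=> [s [h1 h2]].
set d := (([::] : seq 'I_k), (fun _ => 0) : ('I_k -> 'I_xs.+1) -> R).
exists (size s), (fun n => (nth d s n).1), (fun n => (nth d s n).2); split.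
  by move=> n; apply: okl_nth.
move=> x.
under eq_bigr do rewrite h2.
rewrite exchange_big /=.
rewrite (big_nth d) big_mkord; apply: eq_bigr => n _.
by rewrite mulr_sumr /cycstat.
Qed.


Lemma cshiftC k (i j : 'I_k) : cshift i j = cshift j i.
Proof. by apply: val_inj; rewrite /= addnC. Qed.

Lemma cshift_inj k (c : 'I_k) : injective (fun u => cshift u c).
Proof.
move=> u v /(congr1 val) /= /eqP; rewrite eqn_modDr !modn_small ?ltn_ord //.
by move/eqP/val_inj.
Qed.

Definition negk k (i : 'I_k) : 'I_k :=
  Ordinal (ltn_pmod (k - i) (leq_ltn_trans (leq0n i) (ltn_ord i))).

Lemma cshift_neg k (u i : 'I_k) : cshift (cshift u (negk i)) i = u.
Proof.
apply: val_inj => /=.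
rewrite modnDml -addnA addnC -addnA modnDml addnA subnK ?(ltnW (ltn_ord i)) //.
by rewrite addnC modnDr modn_small.
Qed.

Lemma negk_inj k : injective (@negk k).
Proof.
move=> i j e.
have h1 := cshift_neg i i; have h2 := cshift_neg i j.
rewrite -e in h2.
apply: (@cshift_inj _ (cshift i (negk i))).
by rewrite /= (cshiftC i) (cshiftC j) h1 h2.
Qed.

Definition Aseq (R : realType) k xs (b : 'I_k -> R) (x : 'I_k -> 'I_xs.+1) (i : 'I_k) : seq R :=
  [seq (h%:R - b u) | u <- index_enum 'I_k, h <- index_iota (x (cshift u i)).+1 xs.+1].

Lemma Epoly_A (R : realType) k xs (b : 'I_k -> R) (x : 'I_k -> 'I_xs.+1) :
  Epoly xs b (fun j => nat_of_ord (x j)) = \sum_(i < k) \prod_(a <- Aseq b x i) ('X + a%:P).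
Proof.
rewrite /Epoly.
transitivity (\sum_(i < k) \prod_(u < k)
   \prod_((nat_of_ord (x (cshift u (negk i)))).+1 <= h < xs.+1) ('X - (b u)%:P + (h%:R)%:P)).
  apply: eq_bigr => i _; rewrite (reindex_inj (@cshift_inj _ (negk i))) /=.
  by apply: eq_bigr => u _; rewrite cshift_neg.
rewrite [RHS](reindex_inj (@negk_inj k)) /=; apply: eq_bigr => i _.
rewrite big_allpairs_dep; apply: eq_bigr => u _; apply: eq_bigr => h _.
by rewrite polyCB; ring.
Qed.

Lemma size_A (R : realType) k xs (b : 'I_k -> R) (x : 'I_k -> 'I_xs.+1) i :
  size (Aseq b x i) = Ldeg xs (fun j => nat_of_ord (x j)).
Proof.
rewrite /Aseq size_allpairs_dep /Ldeg.
rewrite (reindex_inj (@cshift_inj _ i)) /=.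
rewrite sumnE big_map; apply: eq_bigr => u _.
by rewrite size_iota subSS.
Qed.

Lemma Ecoef_A (R : realType) k xs (b : 'I_k -> R) (x : 'I_k -> 'I_xs.+1) m :
  Ecoef xs b (fun j => nat_of_ord (x j)) m = \sum_(i < k) esym (Aseq b x i) m.
Proof.
rewrite /Ecoef Epoly_A.
case: ifP => hm.
  rewrite coef_sum; apply: eq_bigr => i _.
  by rewrite coef_prodXa size_A leq_subr subKn.
by rewrite big1 // => i _; rewrite esym_big // size_A ltnNge hm.
Qed.


Definition Pdeg (R : realType) (n : nat) (g : nat -> R) :=
  exists p : {poly R}, (size p <= n)%N /\ forall y, g y = p.[y%:R].

Lemma Pdeg_add (R : realType) n (f g : nat -> R) : Pdeg n f -> Pdeg n g -> Pdeg n (fun y => f y + g y).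
Proof.
move=> [p [sp hp]] [q [sq hq]]; exists (p + q); split.
  by apply: leq_trans (size_polyD _ _) _; rewrite geq_max sp sq.
by move=> y; rewrite hornerD hp hq.
Qed.

Lemma Pdeg_scale (R : realType) n c (f : nat -> R) : Pdeg n f -> Pdeg n (fun y => c * f y).
Proof.
move=> [p [sp hp]]; exists (c *: p); split.
  exact: leq_trans (size_scale_leq _ _) sp.
by move=> y; rewrite hornerZ hp.
Qed.

Lemma Pdeg_mono (R : realType) n n' (f : nat -> R) : (n <= n')%N -> Pdeg n f -> Pdeg n' f.
Proof. by move=> le [p [sp hp]]; exists p; split => //; exact: leq_trans le. Qed.

Lemma Pdeg_X (R : realType) q : Pdeg q.+1 (fun y => (y%:R : R) ^+ q).
Proof. by exists 'X^q; split; [rewrite size_polyXn | move=> y; rewrite hornerXn]. Qed.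

Lemma Pdeg_const (R : realType) (c : R) : Pdeg 1 (fun _ => c).
Proof. by exists c%:P; split; [rewrite size_polyC; case: (c != 0) | move=> y; rewrite hornerC]. Qed.

Lemma Pdeg_sum (R : realType) n (I : Type) (r : seq I) (F : I -> nat -> R) :
  (forall j, Pdeg n (F j)) -> Pdeg n (fun y => \sum_(j <- r) F j y).
Proof.
move=> H; elim: r => [|j r IH].
  by exists 0; split; [rewrite size_poly0 | move=> y; rewrite big_nil horner0].
have := Pdeg_add (H j) IH; move=> [p [sp hp]]; exists p; split => // y.
by rewrite big_cons hp.
Qed.

Definition Fpow (R : realType) (q y : nat) : R := \sum_(0 <= h < y) (h%:R : R) ^+ q.

Lemma Fpow_id (R : realType) q y :
  (y%:R : R) ^+ q.+1 = \sum_(s < q.+1) Fpow R s y *+ 'C(q.+1, s).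
Proof.
have -> : (y%:R : R) ^+ q.+1 = \sum_(0 <= h < y) ((h.+1%:R : R) ^+ q.+1 - (h%:R) ^+ q.+1).
  rewrite (telescope_sumr (fun h => (h%:R : R) ^+ q.+1)) //.
  by rewrite expr0n subr0.
rewrite /Fpow.
under eq_bigr => h _ do rewrite -addn1 natrD exprD1n big_ord_recr /= binn addrK.
rewrite exchange_big /=; apply: eq_bigr => s _.
by rewrite sumrMnl.
Qed.

Lemma Fpow_deg (R : realType) q : Pdeg q.+2 (Fpow R q).
Proof.
elim: q {-2}q (leqnn q) => [|q IH] q'.
  rewrite leqn0 => /eqP ->.
  exists 'X; split; first by rewrite size_polyX.
  move=> y; rewrite hornerX /Fpow.
  under eq_bigr do rewrite expr0.
  by rewrite sumr_const_nat subn0.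
rewrite leq_eqVlt => /orP [/eqP ->|]; last by move=> h; apply: IH.
have E : forall y, Fpow R q.+1 y = (q.+2%:R)^-1 * ((y%:R) ^+ q.+2 - \sum_(s < q.+1) Fpow R s y *+ 'C(q.+2, s)).
  move=> y; rewrite Fpow_id big_ord_recr /= binSn addrAC subrr add0r.
  by rewrite -[Fpow R q.+1 y *+ _]mulr_natl mulrA mulVf ?mul1r // pnatr_eq0.
have : Pdeg q.+3 (fun y => (q.+2%:R : R)^-1 * ((y%:R) ^+ q.+2 - \sum_(s < q.+1) Fpow R s y *+ 'C(q.+2, s))).
  apply: Pdeg_scale; apply: Pdeg_add; first exact: Pdeg_X.
  have : Pdeg q.+3 (fun y => (-1) * \sum_(s < q.+1) Fpow R s y *+ 'C(q.+2, s)).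
    apply: Pdeg_scale; apply: Pdeg_sum => s.
    have : Pdeg q.+3 (fun y => ('C(q.+2, s))%:R * Fpow R s y).
      apply: Pdeg_scale; apply: Pdeg_mono (IH s _); last exact: (ltn_ord s).
      by rewrite !ltnS (ltnW (ltn_ord s)).
    by move=> [p [sp hp]]; exists p; split => // z; rewrite -hp mulr_natl.
  by move=> [p [sp hp]]; exists p; split => // z; rewrite -hp mulN1r.
by move=> [p [sp hp]]; exists p; split => // z; rewrite E hp.
Qed.

Definition Hs (R : realType) (xs q y : nat) : R := \sum_(y.+1 <= h < xs.+1) (h%:R : R) ^+ q.

Lemma Hs_poly (R : realType) xs q :
  exists p : {poly R}, (size p <= q.+2)%N /\ forall y, (y <= xs)%N -> Hs R xs q y = p.[y%:R].
Proof.
have [p [sp hp]] := Fpow_deg R q.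
exists ((Fpow R q xs.+1)%:P - p - 'X^q); split.
  apply: leq_trans (size_polyD _ _) _; rewrite geq_max size_polyN size_polyXn leqnSn andbT.
  apply: leq_trans (size_polyD _ _) _; rewrite geq_max size_polyN sp andbT.
  by rewrite size_polyC; case: (_ != 0).
move=> y hy; rewrite !hornerE -hp /Hs.
have -> : Fpow R q xs.+1 = Fpow R q y.+1 + \sum_(y.+1 <= h < xs.+1) (h%:R : R) ^+ q.
  by rewrite /Fpow (@big_cat_nat _ _ _ y.+1).
rewrite /Fpow [\sum_(0 <= h < y.+1) _]big_nat_recr //=; ring.
Qed.


Lemma mono_nseq (R : realType) k xs d (u i : 'I_k) (x : 'I_k -> 'I_xs.+1) :
  mono R (nseq d u) i x = ((nat_of_ord (x (cshift u i)))%:R) ^+ d.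
Proof.
elim: d => [|d IH]; first by rewrite /mono big_nil expr0.
by rewrite /mono /= big_cons -/(mono R _ _ _) IH exprS.
Qed.

Lemma HsD (R : realType) k xs q (u : 'I_k) :
  D q.+1 (fun i (x : 'I_k -> 'I_xs.+1) => Hs R xs q (x (cshift u i))).
Proof.
have [p [sp hp]] := Hs_poly R xs q.
eapply D_ext; last first.
  apply: (D_sum (r := index_enum 'I_q.+2) (F := fun d i x => p`_d * mono R (nseq d u) i x)) => d _.
  apply: D_scale; first by [].
  by apply: D_mono1; rewrite size_nseq -ltnS.
move=> i x /=; rewrite hp; last by rewrite -ltnS.
rewrite (horner_coef_wide _ sp); apply: eq_bigr => d _.
by rewrite mono_nseq.
Qed.

Lemma psum_decomp (R : realType) k xs (b : 'I_k -> R) (x : 'I_k -> 'I_xs.+1) i r :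
  psum (Aseq b x i) r = \sum_(j < k) Hs R xs r (x j) +
    \sum_(l < r) \sum_(u < k) (((-1) ^+ l.+1 * b u ^+ l.+1) *+ 'C(r, l.+1)) *
        Hs R xs (r - l.+1) (x (cshift u i)).
Proof.
have E : forall c h : R, (h - c) ^+ r = h ^+ r +
    \sum_(l < r) (((-1) ^+ l.+1 * c ^+ l.+1) *+ 'C(r, l.+1)) * h ^+ (r - l.+1).
  move=> c h; rewrite exprBn big_ord_recl /= expr0 mul1r subn0 expr0 mulr1 bin0 mulr1n.
  congr (_ + _); apply: eq_bigr => l _.
  by rewrite /bump /= add1n mulrnAl; congr (_ *+ _); ring.
rewrite /psum /Aseq.
rewrite (@big_allpairs_dep _ _ _ _ _ _ (fun (u : 'I_k) (h : nat) => h%:R - b u)).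
under eq_bigr => u _ do under eq_bigr => h _ do rewrite E.
under eq_bigr => u _ do rewrite big_split.
rewrite big_split /=.
congr (_ + _).
  rewrite [RHS](reindex_inj (@cshift_inj _ i)) /=.
  by apply: eq_bigr.
rewrite exchange_big /=; apply: eq_bigr => u _.
rewrite exchange_big /=; apply: eq_bigr => l _.
by rewrite /Hs mulr_sumr.
Qed.

Lemma psumD (R : realType) k xs (b : 'I_k -> R) r :
  D r (fun i (x : 'I_k -> 'I_xs.+1) => psum (Aseq b x i) r).
Proof.
eapply D_ext; first by move=> i x; rewrite psum_decomp.
apply: D_add.
  apply: D_mono (leq0n r) _; apply: D_sym => x s /=.
  by rewrite [RHS](reindex_inj (@perm_inj _ s)).
apply: D_sum => l _; apply: D_sum => u _.
apply: D_scale; first by [].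
apply: D_mono (HsD R xs (r - l.+1) u).
by rewrite -subSn ?subSS ?leq_subr // ltn_ord.
Qed.

Lemma esymD (R : realType) k xs (b : 'I_k -> R) m :
  D m (fun i (x : 'I_k -> 'I_xs.+1) => esym (Aseq b x i) m).
Proof.
elim: m {-2}m (leqnn m) => [|m IH] m'.
  rewrite leqn0 => /eqP ->.
  by apply: (D_ext _ (@D_const R k xs 1)) => i x /=; rewrite esym0.
rewrite leq_eqVlt => /orP [/eqP ->|]; last by move=> h; apply: IH.
eapply D_ext.
  move=> i x.
  have := newton (Aseq b x i) m.+1.
  move=> h.
  have -> : esym (Aseq b x i) m.+1 = (m.+1%:R)^-1 * (m.+1%:R * esym (Aseq b x i) m.+1).
    by rewrite mulrA mulVf ?mul1r // pnatr_eq0.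
  rewrite h.
  reflexivity.
apply: D_scale; first by [].
apply: D_sum => r _.
have hr := ltn_ord r.
have e : m.+1 = ((m.+1 - r.+1) + r.+1)%N by rewrite subnK.
rewrite [X in D X _]e.
apply: D_mul; last exact: psumD.
apply: D_scale; first by [].
by apply: IH; rewrite subSS leq_subr.
Qed.

Theorem lemma5p2 (R : realType) (k xs : nat) (hk : (0 < k)%N) (hxs : (0 < xs)%N)
  (b : 'I_k -> R) (m : nat) :
  exists (N : nat) (t : 'I_N -> seq 'I_k) (f : 'I_N -> ('I_k -> 'I_xs.+1) -> R),
    (forall n : 'I_N, (size (t n) <= m)%N /\ perm_invariant (f n)) /\
    forall x : 'I_k -> 'I_xs.+1,
      Ecoef xs b (fun j => nat_of_ord (x j)) m =
      \sum_(n < N) f n x * @cycstat R k (t n) (fun j => nat_of_ord (x j)).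
Proof.
have [N [t [f [H1 H2]]]] := D_final (esymD xs b m).
exists N, t, f; split => // x.
by rewrite Ecoef_A; apply: H2.
Qed.
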